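(* Let $X$ be a complete orthomodular lattice. Then the unital involutive quantale $\mathrm{Lin}(X)$ (multiplication = composition, unit = identity map, pointwise joins, involution $s\mapsto s^\star$), equipped with the endomap $[-]\colon\mathrm{Lin}(X)\to\mathrm{Lin}(X)$ given by $[s]=\pi_{s^\star(1)^\perp}$, is a Foulis quantale. In particular $[\mathrm{id}_X]$ is the zero map, and for $s,t\in\mathrm{Lin}(X)$ we have $s\circ t=0$ iff $t=[s]\circ r$ for some $r\in\mathrm{Lin}(X)$.
   Context: An ortholattice is a bounded lattice with an involutive order-reversing map $x\mapsto x^\perp$ with $x\wedge x^\perp=0$; it is orthomodular if $x\le y$ implies $y=x\vee(x^\perp\wedge y)$. Write $x\perp y$ iff $x\le y^\perp$. A map $f\colon X\to X$ on a complete orthomodular lattice is linear if there is $h$ with $f(x)\perp y\iff x\perp h(y)$ for all $x,y$; such $h$ is unique, denoted $f^\star$; $\mathrm{Lin}(X)$ is the set of linear maps $X\to X$. For $a\in X$ the Sasaki projection is $\pi_a(y)=a\wedge(a^\perp\vee y)$. A quantale is a complete lattice with associative multiplication distributing over arbitrary joins on both sides; unital if it has a two-sided unit $e$; involutive if equipped with a join-preserving semigroup involution $*$. A Foulis quantale is a unital involutive quantale $Q$ with an endomap $[-]\colon Q\to Q$ such that: (a) $[s]\cdot[s]=[s]=[s]^*$ for all $s$; (b) $[e]=0$; (c) for all $s,x\in Q$: $s\cdot x=0$ iff there exists $y\in Q$ with $x=[s]\cdot y$. *)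

(* Defs.v *)
From Stdlib Require Import ClassicalEpsilon.

Set Implicit Arguments.

Record COML := {
  carrier :> Type;
  le : carrier -> carrier -> Prop;
  sup : (carrier -> Prop) -> carrier;
  orth : carrier -> carrier;
  le_refl : forall x, le x x;
  le_trans : forall x y z, le x y -> le y z -> le x z;
  le_antisym : forall x y, le x y -> le y x -> x = y;
  sup_ub : forall (S : carrier -> Prop) x, S x -> le x (sup S);
  sup_least : forall (S : carrier -> Prop) y,
      (forall x, S x -> le x y) -> le (sup S) y;
  orth_invol : forall x, orth (orth x) = x;
  orth_antitone : forall x y, le x y -> le (orth y) (orth x);
  orth_meet : forall x,
      sup (fun z => le z x /\ le z (orth x)) = sup (fun _ => False);
  orthomodular : forall x y, le x y ->
      y = sup (fun z => z = x \/ z = sup (fun w => le w (orth x) /\ le w y))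
}.

Section Ops.
Variable X : COML.

Definition bot : X := sup X (fun _ => False).
Definition top : X := sup X (fun _ => True).
Definition join (x y : X) : X := sup X (fun z => z = x \/ z = y).
Definition meet (x y : X) : X := sup X (fun z => le X z x /\ le X z y).

Definition orthog (x y : X) : Prop := le X x (orth X y).

Definition is_adjoint (f h : X -> X) : Prop :=
  forall x y, orthog (f x) y <-> orthog x (h y).
Definition is_linear (f : X -> X) : Prop := exists h, is_adjoint f h.

(** f^star: the (unique, when f is linear) adjoint, chosen by epsilon. *)
Definition lstar (f : X -> X) : X -> X :=
  epsilon (inhabits f) (fun h => is_adjoint f h).

Definition sasaki (a : X) (y : X) : X := meet a (join (orth X a) y).

(** Operations on Lin(X) (as functions X -> X; membership via is_linear) *)
Definition fle (f g : X -> X) : Prop := forall x, le X (f x) (g x).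
Definition fsup (S : (X -> X) -> Prop) : X -> X :=
  fun x => sup X (fun z => exists f, S f /\ z = f x).
Definition fcomp (f g : X -> X) : X -> X := fun x => f (g x).
Definition fid : X -> X := fun x => x.

Definition fbracket (s : X -> X) : X -> X := sasaki (orth X (lstar s top)).

End Ops.

(** * Quantale notions, relative to a subset P of a carrier Q
    (Q with its operations restricted to P). *)
Section Quantale.
Variables (Q : Type) (P : Q -> Prop) (qle : Q -> Q -> Prop)
  (qsup : (Q -> Prop) -> Q) (mul : Q -> Q -> Q).

Definition image (f : Q -> Q) (S : Q -> Prop) : Q -> Prop :=
  fun z => exists t, S t /\ z = f t.

Definition is_quantale_on : Prop :=
  (forall x, P x -> qle x x) /\
  (forall x y z, P x -> P y -> P z -> qle x y -> qle y z -> qle x z) /\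
  (forall x y, P x -> P y -> qle x y -> qle y x -> x = y) /\
  (forall S, (forall x, S x -> P x) -> P (qsup S)) /\
  (forall S x, (forall x, S x -> P x) -> S x -> qle x (qsup S)) /\
  (forall S y, (forall x, S x -> P x) -> P y ->
      (forall x, S x -> qle x y) -> qle (qsup S) y) /\
  (forall x y, P x -> P y -> P (mul x y)) /\
  (forall x y z, P x -> P y -> P z -> mul x (mul y z) = mul (mul x y) z) /\
  (forall s S, P s -> (forall x, S x -> P x) ->
      mul s (qsup S) = qsup (image (mul s) S)) /\
  (forall s S, P s -> (forall x, S x -> P x) ->
      mul (qsup S) s = qsup (image (fun t => mul t s) S)).

Variable e : Q.
Definition is_unital_on : Prop :=
  P e /\ (forall x, P x -> mul e x = x /\ mul x e = x).

Variable star : Q -> Q.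
Definition is_involution_on : Prop :=
  (forall x, P x -> P (star x)) /\
  (forall x, P x -> star (star x) = x) /\
  (forall x y, P x -> P y -> star (mul x y) = mul (star y) (star x)) /\
  (forall S, (forall x, S x -> P x) -> star (qsup S) = qsup (image star S)).

Variable br : Q -> Q.
Definition qzero : Q := qsup (fun _ => False).

Definition is_Foulis_quantale_on : Prop :=
  is_quantale_on /\ is_unital_on /\ is_involution_on /\
  (forall s, P s -> P (br s)) /\
  (forall s, P s -> mul (br s) (br s) = br s /\ br s = star (br s)) /\
  br e = qzero /\
  (forall s x, P s -> P x ->
      (mul s x = qzero <-> exists y, P y /\ x = mul (br s) y)).

End Quantale.

(* Main.v *)
Require Import Defs.
From Stdlib Require Import ClassicalEpsilon FunctionalExtensionality.

Arguments orthog {X}. Arguments is_adjoint {X}. Arguments is_linear {X}.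
Arguments lstar {X}. Arguments sasaki {X}. Arguments fle {X}. Arguments fsup {X}.
Arguments fcomp {X}. Arguments fid {X}. Arguments fbracket {X}.

Section L.
Variable X : COML.
Local Notation "x <= y" := (le X x y).
Local Notation o := (orth X).

Lemma sup_ext (S T : X -> Prop) : (forall z, S z <-> T z) -> sup X S = sup X T.
Proof. intro H. apply le_antisym; apply sup_least; intros; apply sup_ub; apply H; auto. Qed.

Lemma bot_le x : bot X <= x. Proof. apply sup_least. intros _ []. Qed.
Lemma le_top x : x <= top X. Proof. apply sup_ub. exact I. Qed.
Lemma orth_swap x y : x <= o y -> y <= o x.
Proof. intro H. apply orth_antitone in H. rewrite orth_invol in H. exact H. Qed.

Lemma join_l x y : x <= join X x y. Proof. apply sup_ub. auto. Qed.
Lemma join_r x y : y <= join X x y. Proof. apply sup_ub. auto. Qed.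
Lemma join_lub x y z : x <= z -> y <= z -> join X x y <= z.
Proof. intros. apply sup_least. intros w [-> | ->]; auto. Qed.
Lemma meet_l x y : meet X x y <= x. Proof. apply sup_least. intros w [H _]; exact H. Qed.
Lemma meet_r x y : meet X x y <= y. Proof. apply sup_least. intros w [_ H]; exact H. Qed.
Lemma meet_glb x y z : z <= x -> z <= y -> z <= meet X x y.
Proof. intros. apply sup_ub. auto. Qed.

Lemma demorgan_join x y : o (join X x y) = meet X (o x) (o y).
Proof. apply le_antisym.
 - apply meet_glb; apply orth_antitone; [apply join_l | apply join_r].
 - apply orth_swap. apply join_lub; apply orth_swap; [apply meet_l|apply meet_r].
Qed.

Lemma demorgan_meet x y : o (meet X x y) = join X (o x) (o y).
Proof. rewrite <- (orth_invol X (join X (o x) (o y))). rewrite demorgan_join, !orth_invol. reflexivity. Qed.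

Lemma sasaki_fix a b : b <= a -> meet X a (join X (o a) b) = b.
Proof. intro H.
 assert (H1 : o a <= o b) by (apply orth_antitone; exact H).
 pose proof (orthomodular X _ _ H1) as E.
 change (o b = join X (o a) (meet X (o (o a)) (o b))) in E.
 apply (f_equal o) in E. rewrite demorgan_join, demorgan_meet, !orth_invol in E.
 symmetry; exact E.
Qed.

Lemma self_orth_bot z : z <= o z -> z = bot X.
Proof. intro H. apply le_antisym; [|apply bot_le]. unfold bot. rewrite <- (orth_meet X z).
 apply sup_ub. split; [apply le_refl | exact H]. Qed.

Lemma orth_top : o (top X) = bot X.
Proof. apply self_orth_bot. rewrite orth_invol. apply le_top. Qed.

Lemma sup_le_iff (S : X -> Prop) y : sup X S <= y <-> forall x, S x -> x <= y.
Proof. split; intros H.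
 - intros x Sx. apply le_trans with (sup X S); [apply sup_ub; auto | exact H].
 - apply sup_least; exact H. Qed.

Lemma orthog_sym (x y : X) : orthog x y -> orthog y x.
Proof. unfold orthog. apply orth_swap. Qed.

Lemma adj_galois {f h : X -> X} : is_adjoint f h -> forall x y, f x <= y <-> x <= o (h (o y)).
Proof. intros H x y. pose proof (H x (o y)) as K. unfold orthog in K.
  rewrite orth_invol in K. exact K. Qed.

Lemma adj_mono {f h : X -> X} : is_adjoint f h -> forall x y, x <= y -> f x <= f y.
Proof. intros H x y Hxy. apply (proj2 (adj_galois H _ _)).
  apply le_trans with y; [exact Hxy|]. apply (proj1 (adj_galois H _ _)). apply le_refl. Qed.

Lemma adj_sup {f h : X -> X} : is_adjoint f h -> forall S,
  f (sup X S) = sup X (fun z => exists x, S x /\ z = f x).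
Proof. intros H S. apply le_antisym.
 - apply (proj2 (adj_galois H _ _)). apply sup_least. intros x Sx.
   apply (proj1 (adj_galois H _ _)). apply sup_ub. eauto.
 - apply sup_least. intros z [x [Sx ->]]. apply (adj_mono H). apply sup_ub. exact Sx.
Qed.

Lemma adj_sym {f h : X -> X} : is_adjoint f h -> is_adjoint h f.
Proof. intros H x y. split; intro K.
 - apply orthog_sym. apply H. apply orthog_sym. exact K.
 - apply orthog_sym. apply H. apply orthog_sym. exact K. Qed.

Lemma orth_ext a b : (forall x, x <= o a <-> x <= o b) -> a = b.
Proof. intro H. apply le_antisym.
 - pose proof (proj2 (H (o b)) (le_refl X _)) as K. apply orth_antitone in K.
   rewrite !orth_invol in K. exact K.
 - pose proof (proj1 (H (o a)) (le_refl X _)) as K. apply orth_antitone in K.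
   rewrite !orth_invol in K. exact K. Qed.

Lemma adj_unique {f h h' : X -> X} : is_adjoint f h -> is_adjoint f h' -> h = h'.
Proof. intros H H'. apply functional_extensionality. intro y. apply orth_ext. intro x.
  split; intro K.
  - apply (proj1 (H' x y)). apply (proj2 (H x y)). exact K.
  - apply (proj1 (H x y)). apply (proj2 (H' x y)). exact K. Qed.

Lemma lstar_spec {f : X -> X} : is_linear f -> is_adjoint f (lstar f).
Proof. intro H. unfold lstar. apply epsilon_spec. exact H. Qed.

Lemma lstar_eq {f h : X -> X} : is_adjoint f h -> lstar f = h.
Proof. intro H. apply (adj_unique (lstar_spec (ex_intro _ h H)) H). Qed.

Lemma fsup_adj (S : (X -> X) -> Prop) : (forall f, S f -> is_linear f) ->
  is_adjoint (fsup S) (fsup (image (@lstar X) S)).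
Proof. intros HS x y. unfold orthog, fsup. split; intro K.
- apply orth_swap. apply sup_least. intros z [f [[t [St ->]] ->]].
  apply orth_swap. apply (proj1 (lstar_spec (HS t St) x y)). unfold orthog.
  apply le_trans with (sup X (fun z => exists f, S f /\ z = f x)); [apply sup_ub; eauto | exact K].
- apply sup_least. intros z [f [Sf ->]]. apply (proj2 (lstar_spec (HS f Sf) x y)).
  unfold orthog. apply orth_swap. eapply le_trans; [|apply orth_swap; exact K].
  apply sup_ub. exists (lstar f). split; [exists f; auto | reflexivity].
Qed.

Lemma comp_adj {f g hf hg : X -> X} : is_adjoint f hf -> is_adjoint g hg ->
  is_adjoint (fcomp f g) (fcomp hg hf).
Proof. intros Hf Hg x y. unfold fcomp. split; intro K.
 - apply Hg. apply Hf. exact K.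
 - apply Hf. apply Hg. exact K. Qed.

Lemma fid_adj : is_adjoint (@fid X) (@fid X).
Proof. intros x y. unfold fid. tauto. Qed.

Lemma sasaki_galois a x y : sasaki a x <= y <-> x <= join X (o a) (meet X a y).
Proof. unfold sasaki. split; intro K.
 - assert (E : join X (o a) x = join X (o a) (meet X a (join X (o a) x))).
   { pose proof (orthomodular X (o a) (join X (o a) x) (join_l _ _)) as E.
     change (join X (o a) x = join X (o a) (meet X (o (o a)) (join X (o a) x))) in E.
     rewrite orth_invol in E. exact E. }
   apply le_trans with (join X (o a) x); [apply join_r|]. rewrite E.
   apply join_lub; [apply join_l|]. eapply le_trans; [|apply join_r].
   apply meet_glb; [apply meet_l | exact K].
 - apply le_trans with (meet X a (join X (o a) (meet X a y))).
   + apply meet_glb; [apply meet_l|]. eapply le_trans; [apply meet_r|].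
     apply join_lub; [apply join_l | exact K].
   + rewrite sasaki_fix by apply meet_l. apply meet_r.
Qed.

Lemma sasaki_adj (a : X) : is_adjoint (sasaki a) (sasaki a).
Proof. intros x y. unfold orthog. rewrite sasaki_galois. unfold sasaki.
  rewrite demorgan_meet, demorgan_join, orth_invol. tauto. Qed.

Lemma sasaki_le a x : sasaki a x <= a.
Proof. apply meet_l. Qed.

Lemma fsup_empty z : fsup (fun _ : X -> X => False) z = bot X.
Proof. apply le_antisym; [|apply bot_le]. apply sup_least. intros w [f [[] _]]. Qed.

Lemma quantale_part : is_quantale_on (@is_linear X) (@fle X) (@fsup X) (@fcomp X).
Proof. unfold is_quantale_on. repeat split.
 - intros x _ y. apply le_refl.
 - intros x y z _ _ _ H1 H2 w. eapply le_trans; [apply H1|apply H2].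
 - intros x y _ _ H1 H2. apply functional_extensionality. intro w. apply le_antisym; auto.
 - intros S HS. exists (fsup (image (@lstar X) S)). apply fsup_adj. exact HS.
 - intros S x _ Sx w. apply sup_ub. eauto.
 - intros S y _ _ H w. apply sup_least. intros z [f [Sf ->]]. apply H. exact Sf.
 - intros x y [hx Hx] [hy Hy]. exists (fcomp hy hx). apply comp_adj; auto.
 - intros s S Hs HS. apply functional_extensionality. intro x. unfold fcomp, fsup.
   rewrite (adj_sup (lstar_spec Hs)). apply sup_ext. intro z. split.
   + intros [w [[f [Sf ->]] ->]]. exists (fcomp s f). split; [exists f; auto | reflexivity].
   + intros [f [[t [St ->]] ->]]. exists (t x). split; [exists t; auto | reflexivity].
 - intros s S Hs HS. apply functional_extensionality. intro x. unfold fcomp, fsup.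
   apply sup_ext. intro z. split.
   + intros [f [Sf ->]]. exists (fcomp f s). split; [exists f; auto | reflexivity].
   + intros [f [[t [St ->]] ->]]. exists t. split; [auto | reflexivity].
Qed.

Lemma unital_part : is_unital_on (@is_linear X) (@fcomp X) (@fid X).
Proof. split. - exists (@fid X). apply fid_adj. - intros x _. split; reflexivity. Qed.

Lemma invol_part : is_involution_on (@is_linear X) (@fsup X) (@fcomp X) (@lstar X).
Proof. repeat split.
 - intros x Hx. exists x. apply adj_sym. apply lstar_spec. exact Hx.
 - intros x Hx. apply lstar_eq. apply adj_sym. apply lstar_spec. exact Hx.
 - intros x y Hx Hy. apply lstar_eq. apply comp_adj; apply lstar_spec; auto.
 - intros S HS. apply lstar_eq. apply fsup_adj. exact HS.
Qed.

Lemma br_lin : forall s : X -> X, is_linear s -> is_linear (fbracket s).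
Proof. intros s _. exists (fbracket s). apply sasaki_adj. Qed.

Lemma br_a : forall s : X -> X, is_linear s ->
  fcomp (fbracket s) (fbracket s) = fbracket s /\ fbracket s = lstar (fbracket s).
Proof. intros s _. split.
 - apply functional_extensionality. intro x. unfold fcomp, fbracket.
   unfold sasaki at 1. apply sasaki_fix. apply sasaki_le.
 - symmetry. apply lstar_eq. apply sasaki_adj. Qed.

Lemma br_b : fbracket (@fid X) = qzero (@fsup X).
Proof. apply functional_extensionality. intro x. unfold qzero. rewrite fsup_empty.
  unfold fbracket. rewrite (lstar_eq fid_adj). unfold fid. rewrite orth_top.
  apply le_antisym; [apply sasaki_le | apply bot_le]. Qed.

Lemma br_c : forall (s x : X -> X), is_linear s -> is_linear x ->
  (fcomp s x = qzero (@fsup X) <-> exists y, is_linear y /\ x = fcomp (fbracket s) y).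
Proof. intros s x Hs Hx. split.
 - intro H. exists x. split; [exact Hx|]. apply functional_extensionality. intro z.
   unfold fcomp, fbracket. symmetry. apply sasaki_fix.
   apply (proj1 (lstar_spec Hs (x z) (top X))). unfold orthog.
   pose proof (f_equal (fun F => F z) H) as E. simpl in E. unfold fcomp, qzero in E.
   rewrite fsup_empty in E. rewrite E. apply bot_le.
 - intros [y [Hy ->]]. apply functional_extensionality. intro z. unfold qzero.
   rewrite fsup_empty. unfold fcomp. apply self_orth_bot.
   apply (proj2 (lstar_spec Hs _ _)). unfold orthog.
   apply le_trans with (o (lstar s (top X))).
   + unfold fbracket. apply sasaki_le.
   + apply orth_antitone. apply (adj_mono (adj_sym (lstar_spec Hs))). apply le_top.
Qed.

End L.

Theorem mainTheorem4 (X : COML) :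
  is_Foulis_quantale_on (@is_linear X) (@fle X) (@fsup X) (@fcomp X)
    (@fid X) (@lstar X) (@fbracket X).
Proof.
  split; [exact (quantale_part X)|].
  split; [exact (unital_part X)|].
  split; [exact (invol_part X)|].
  split; [exact (@br_lin X)|].
  split; [exact (@br_a X)|].
  split; [exact (br_b X)|].
  exact (@br_c X).
Qed.
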